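(* Let $S^1\subset\mathbb R^2$ be the unit circle, parametrized by $x(\theta)=(\cos\theta,\sin\theta)$. Define, for $m=x(\theta)\ne m'=x(\theta')$, \[ K_{1/2}(m,m')=1-\frac{1}{2\pi}\ln\big(2(1-\cos(\theta'-\theta))\big). \] Then there is no function $K:S^1\times S^1\to\mathbb R$ of positive type (i.e. symmetric positive semidefinite kernel: $\sum_{i,j}\alpha_i\alpha_jK(m_i,m_j)\ge0$ for all finite families) with $K(m,m')=K_{1/2}(m,m')$ for all $m\ne m'$.
   Context: Note $K_{1/2}$ is well defined and jointly continuous on $S^1\times S^1$ minus the diagonal $\{(m,m)\}$, and $K_{1/2}(m,m')\to+\infty$ as $m'\to m$. *)

(* Defs.v *)
From Stdlib Require Import Reals Lra.
Open Scope R_scope.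

Definition S1 : Type := {p : R * R | fst p ^ 2 + snd p ^ 2 = 1}.

Lemma cos_sin_on_circle (t : R) : fst (cos t, sin t) ^ 2 + snd (cos t, sin t) ^ 2 = 1.
Proof. simpl. pose proof (sin2_cos2 t) as H. unfold Rsqr in H. lra. Qed.

Definition xS1 (t : R) : S1 := exist _ (cos t, sin t) (cos_sin_on_circle t).

Definition K_half_angle (t t' : R) : R :=
  1 - / (2 * PI) * ln (2 * (1 - cos (t' - t))).

(* Kernel of positive type: symmetric and every finite Gram quadratic form
   is nonnegative (families indexed by 0..n, i.e. n+1 points). *)
Definition positive_type (K : S1 -> S1 -> R) : Prop :=
  (forall m m', K m m' = K m' m) /\
  (forall (n : nat) (pts : nat -> S1) (a : nat -> R),
     0 <= sum_f_R0 (fun i => sum_f_R0 (fun j => a i * a j * K (pts i) (pts j)) n) n).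

(* Main.v *)
Require Import Defs.
From Stdlib Require Import Reals Lra Classical ClassicalEpsilon.
Open Scope R_scope.

Definition delta (n : nat) : R := exp (- (PI * (INR n + 1))).

Lemma delta_pos n : 0 < delta n.
Proof. apply exp_pos. Qed.

Lemma delta_lt1 n : delta n < 1.
Proof.
  unfold delta. pose proof PI_RGT_0. pose proof (pos_INR n).
  assert (0 < PI * (INR n + 1)) by (apply Rmult_lt_0_compat; lra).
  assert (E : exp (- (PI * (INR n + 1))) < exp 0) by (apply exp_increasing; lra).
  rewrite exp_0 in E. exact E.
Qed.

Lemma Kbig_pos n h : 0 < h -> h < delta n ->
  cos h < 1 /\ INR n < K_half_angle 0 h.
Proof.
  intros H0 H1. pose proof (delta_lt1 n) as Hd1. pose proof PI2_1 as HP.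
  pose proof PI_RGT_0 as HP0.
  assert (Hc : cos h = 1 - 2 * sin (h/2) * sin (h/2)).
  { rewrite <- cos_2a_sin. f_equal. field. }
  assert (Hs0 : 0 < sin (h/2)) by (apply sin_gt_0; lra).
  assert (Hs1 : sin (h/2) < h/2) by (apply sin_lt_x; lra).
  split. { rewrite Hc. nra. }
  unfold K_half_angle. replace (h - 0) with h by ring.
  set (s := sin (h/2)) in *.
  assert (E1 : 2 * (1 - cos h) = (2*s) * (2*s)) by (rewrite Hc; ring).
  rewrite E1.
  assert (L1 : ln ((2*s)*(2*s)) < ln (h*h)).
  { apply ln_increasing. apply Rmult_lt_0_compat; lra.
    apply Rmult_le_0_lt_compat; lra. }
  rewrite (ln_mult (2*s) (2*s)) in L1 by lra. rewrite (ln_mult h h) in L1 by lra.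
  assert (L2 : ln h < - (PI * (INR n + 1))).
  { rewrite <- (ln_exp (- (PI * (INR n + 1)))). apply ln_increasing; auto. }
  rewrite (ln_mult (2*s) (2*s)) by lra.
  assert (HL : ln (2*s) + ln (2*s) < - 2 * (PI * (INR n + 1))) by lra.
  assert (Hi : 0 < / (2 * PI)) by (apply Rinv_0_lt_compat; lra).
  assert (H3 : / (2*PI) * (ln (2*s) + ln (2*s)) < / (2*PI) * (- 2 * (PI * (INR n + 1)))).
  { apply Rmult_lt_compat_l; auto. }
  replace (/ (2*PI) * (- 2 * (PI * (INR n + 1)))) with (- (INR n + 1)) in H3 by (field; lra).
  lra.
Qed.

Lemma Kbig n t t' : 0 < Rabs (t' - t) < delta n ->
  cos (t' - t) < 1 /\ INR n < K_half_angle t t'.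
Proof.
  intros [H0 H1].
  destruct (Rcase_abs (t' - t)) as [Hn|Hp].
  - rewrite Rabs_left in H0, H1 by lra.
    destruct (Kbig_pos n (- (t' - t))) as [A B]; try lra.
    rewrite cos_neg in A. split; auto.
    unfold K_half_angle in *. rewrite Rminus_0_r, cos_neg in B. exact B.
  - rewrite Rabs_right in H0, H1 by lra.
    destruct (Kbig_pos n (t' - t)) as [A B]; try lra.
    split; auto. unfold K_half_angle in *. rewrite Rminus_0_r in B. exact B.
Qed.

Lemma nested (d : R -> R)
  (step : forall n a b, a < b -> exists a' b', a <= a' /\ a' < b' /\ b' <= b /\
           forall x, a' <= x <= b' -> INR n < d x) : False.
Proof.
  assert (H : forall n a b, exists q : R*R, a < b ->
     a <= fst q /\ fst q < snd q /\ snd q <= b /\ forall x, fst q <= x <= snd q -> INR n < d x).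
  { intros n a b. destruct (Rlt_dec a b) as [h|h].
    - destruct (step n a b h) as [a' [b' P]]. exists (a', b'). intros _. exact P.
    - exists (0,0). intros; lra. }
  pose (g n a b := proj1_sig (constructive_indefinite_description _ (H n a b))).
  assert (Hg : forall n a b, a < b -> a <= fst (g n a b) /\ fst (g n a b) < snd (g n a b) /\
     snd (g n a b) <= b /\ forall x, fst (g n a b) <= x <= snd (g n a b) -> INR n < d x).
  { intros n a b hab. unfold g. destruct (constructive_indefinite_description _ (H n a b)) as [q Q].
    simpl. auto. }
  pose (s := fix s k := match k with O => (0,1) | S k => g k (fst (s k)) (snd (s k)) end).
  assert (Hlt : forall k, fst (s k) < snd (s k)).
  { induction k; simpl. lra. destruct (Hg k _ _ IHk) as [A [B _]]. exact B. }
  assert (HS : forall k, fst (s k) <= fst (s (S k)) /\ snd (s (S k)) <= snd (s k)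
     /\ forall x, fst (s (S k)) <= x <= snd (s (S k)) -> INR k < d x).
  { intro k. simpl. destruct (Hg k _ _ (Hlt k)) as [A [B [C D]]]. auto. }
  assert (Hmono : forall k j : nat, fst (s k) <= fst (s (k+j)%nat) /\ snd (s (k+j)%nat) <= snd (s k)).
  { intros k j. induction j. rewrite Nat.add_0_r. lra.
    rewrite Nat.add_succ_r. destruct (HS (k+j)%nat) as [A [B _]]. lra. }
  assert (Hab : forall k m : nat, fst (s k) <= snd (s m)).
  { intros k m. destruct (Hmono k m) as [A _]. destruct (Hmono m k) as [_ B].
    rewrite Nat.add_comm in B. pose proof (Hlt (k+m)%nat). lra. }
  destruct (completeness (fun x => exists k, x = fst (s k))) as [p [Pub Plub]].
  { exists (snd (s 0%nat)). intros x [k ->]. apply Hab. }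
  { exists (fst (s 0%nat)). eauto. }
  assert (Hp : forall n, INR n < d p).
  { intro n. destruct (HS n) as [_ [_ D]]. apply D. split.
    - apply Pub. eauto.
    - apply Plub. intros x [k ->]. apply Hab. }
  destruct (INR_unbounded (d p)) as [n Hn]. specialize (Hp n). lra.
Qed.

Theorem mainTheorem6 :
  ~ exists K : S1 -> S1 -> R,
      positive_type K /\
      (forall t t' : R, xS1 t <> xS1 t' -> K (xS1 t) (xS1 t') = K_half_angle t t').
Proof.
  intros [K [[Hsym Hpos] HK]].
  set (d := fun t => K (xS1 t) (xS1 t)).
  assert (Hpair : forall t t', cos (t' - t) < 1 -> 2 * K_half_angle t t' <= d t + d t').
  { intros t t' Hc.
    assert (Hne : xS1 t <> xS1 t').
    { intro E. apply (f_equal (@proj1_sig _ _)) in E. simpl in E.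
      injection E as E1 E2. rewrite cos_minus, <- E1, <- E2 in Hc.
      pose proof (sin2_cos2 t') as S. pose proof (sin2_cos2 t) as S'. unfold Rsqr in S, S'. lra. }
    specialize (Hpos 1%nat (fun i => match i with O => xS1 t | _ => xS1 t' end)
                   (fun i => match i with O => 1 | _ => -1 end)).
    simpl in Hpos. rewrite (Hsym (xS1 t') (xS1 t)), (HK t t' Hne) in Hpos.
    unfold d. lra. }
  apply (nested d). intros n a b hab.
  set (L := Rmin (b - a) (delta n / 2)).
  assert (HL0 : 0 < L).
  { unfold L. apply Rmin_glb_lt. lra. pose proof (delta_pos n). lra. }
  assert (HL1 : L <= b - a) by apply Rmin_l.
  assert (HL2 : L <= delta n / 2) by apply Rmin_r.
  pose proof (delta_pos n).
  destruct (classic (forall x, a <= x <= a + L/3 -> INR n < d x)) as [A|A].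
  { exists a, (a + L/3). repeat split; try lra; auto. }
  destruct (classic (forall x, a + 2*L/3 <= x <= a + L -> INR n < d x)) as [B|B].
  { exists (a + 2*L/3), (a+L). repeat split; try lra; auto. }
  exfalso.
  apply not_all_ex_not in A as [x1 A]. apply not_all_ex_not in B as [x2 B].
  apply imply_to_and in A as [A1 A2]. apply imply_to_and in B as [B1 B2].
  apply Rnot_lt_le in A2. apply Rnot_lt_le in B2.
  destruct (Kbig n x1 x2) as [C D].
  { rewrite Rabs_right by lra. split; lra. }
  specialize (Hpair x1 x2 C). lra.
Qed.
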